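(* Let $\mathtt L\in\{Y,Z\}$. As algebras of functions on $\mathcal C$ (on $\mathcal C^\circ$ if $\mathtt L=Z$), one has $\mathcal H_{\mathtt L}\subset\mathcal L_{\mathtt L}\subset\mathcal I_{\mathtt L}$.
   Context: Fix integers $m\ge2$, $n\ge1$, $\mathbf d=(d_0,\dots,d_{m-1})\in\mathbb N^m$ with $d_0\ge1$, $|\mathbf d|=\sum_sd_s$, and $\mathbf q=(q_0,\dots,q_{m-1})\in(\mathbb C^\times)^m$. Indices $s$ range over $\mathbb Z_m\cong\{0,\dots,m-1\}$; spin indices are pairs $(s,\alpha)$ with $1\le\alpha\le d_s$, totally ordered by $(s,\alpha)<(r,\beta)$ iff $s<r$, or $s=r$ and $\alpha<\beta$; $\rho:\{1,\dots,|\mathbf d|\}\to\{\text{spin indices}\}$ is the order-preserving bijection, and no spin index satisfies $(s,\alpha)\le\rho(0)$. $\mathcal M^\bullet$ is the variety of tuples $(X_s,Y_s,V_{s,\alpha},W_{s,\alpha})$ ($X_s,Y_s$ $n\times n$, $V_{s,\alpha}$ $1\times n$, $W_{s,\alpha}$ $n\times1$) with $\mathrm{Id}_n+X_sY_s$, $\mathrm{Id}_n+Y_sX_s$, $\mathrm{Id}_n+W_{s,\alpha}V_{s,\alpha}$ invertible and $1+V_{s,\alpha}W_{s,\alpha}\ne0$, with $\mathrm{GL}(n)^m$-action $g\cdot(X_s,Y_s,W_{s,\alpha},V_{s,\alpha})=(g_sX_sg_{s+1}^{-1},g_{s+1}Y_sg_s^{-1},g_sW_{s,\alpha},V_{s,\alpha}g_s^{-1})$.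 $X$ (resp. $Y$) is the $nm\times nm$ block matrix with $X_s$ in block $(s,s+1)$ (resp. $Y_s$ in block $(s+1,s)$); where $X$ is invertible, $Z=\sum_sZ_s$ with $Z_s=Y_s+X_s^{-1}$ in block $(s+1,s)$. $W_{s,\alpha}$ (resp. $V_{s,\alpha}$) is regarded as a column (resp. row) vector of length $nm$ supported in block $s$. $\mathcal C$ is the GIT quotient by $\mathrm{GL}(n)^m$ of the subvariety of $\mathcal M^\bullet$ defined by $(\mathrm{Id}_n+X_sY_s)(\mathrm{Id}_n+Y_{s-1}X_{s-1})^{-1}=q_s(\mathrm{Id}_n+W_{s,d_s}V_{s,d_s})\cdots(\mathrm{Id}_n+W_{s,1}V_{s,1})$ for all $s$; $\mathcal C^\circ$ is its open subset where $X$ is invertible. For $b\in\{0,\dots,|\mathbf d|\}$, $\Phi^{(b)}_s=(\mathrm{Id}_n+X_sY_s)(\mathrm{Id}_n+Y_{s-1}X_{s-1})^{-1}\prod^{\rightarrow}_{\alpha:(s,\alpha)\le\rho(b)}(\mathrm{Id}_n+W_{s,\alpha}V_{s,\alpha})^{-1}$ (increasing $\alpha$ left to right), $\Phi^{(b)}$ is the block diagonal matrix with blocks $\Phi^{(b)}_s$, and $\mathtt L^{(b)}=\Phi^{(b)}\mathtt L$. The algebras (of images in $\mathcal C$, resp. $\mathcal C^\circ$, of invariant functions) are: $\mathcal H_{\mathtt L}$ generated by $\operatorname{tr}(\mathtt L^k)$, $k\in\mathbb N$; $\mathcal L_{\mathtt L}$ generated by $\operatorname{tr}((\mathtt L^{(b)})^k)$,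 $k\in\mathbb N$, $0\le b\le|\mathbf d|$; $\mathcal I_{\mathtt L}$ generated by $\operatorname{tr}(\mathtt L^k)$ and $\operatorname{tr}(W_{s,\alpha}V_{r,\beta}\mathtt L^k)=V_{r,\beta}\mathtt L^kW_{s,\alpha}$, $k\in\mathbb N$, $(s,\alpha),(r,\beta)$ spin indices. *)

(* Defs.v *)
From HB Require Import structures.
From mathcomp Require Import all_boot all_order all_algebra.
From mathcomp Require Import Rstruct complex.
From Stdlib Require Import Rdefinitions.
Set Implicit Arguments. Unset Strict Implicit. Unset Printing Implicit Defensive.
Import Order.TTheory GRing.Theory Num.Theory.
Local Open Scope ring_scope.

Definition CC : numClosedFieldType := (Rdefinitions.R)[i].

Section Setup.
Variables (m n : nat) (d : 'I_m -> nat).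

(* A point of the ambient affine space of tuples (X_s, Y_s, V_{s,a}, W_{s,a}).
   Spin indices (s,alpha) with 1 <= alpha <= d_s are encoded zero-based as
   (s, a) with a : 'I_(d s), alpha = a+1. *)
Record point := Point {
  pX : 'I_m -> 'M[CC]_n;
  pY : 'I_m -> 'M[CC]_n;
  pV : forall s : 'I_m, 'I_(d s) -> 'rV[CC]_n;
  pW : forall s : 'I_m, 'I_(d s) -> 'cV[CC]_n }.

Definition Nbig := (\sum_(s < m) n)%N.
Definition bmx (B : 'I_m -> 'I_m -> 'M[CC]_n) : 'M[CC]_Nbig :=
  @mxblock CC m m (fun _ => n) (fun _ => n) B.

Definition mxpow (A : 'M[CC]_Nbig) (k : nat) : 'M[CC]_Nbig :=
  iter k (mulmx A) 1%:M.

Definition succ (s : 'I_m) : 'I_m := ordS s.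
Definition pred (s : 'I_m) : 'I_m := ord_pred s.

Definition bigX (p : point) : 'M[CC]_Nbig :=
  bmx (fun i j => if j == succ i then pX p i else 0).
Definition bigY (p : point) : 'M[CC]_Nbig :=
  bmx (fun i j => if i == succ j then pY p j else 0).
Definition bigZ (p : point) : 'M[CC]_Nbig :=
  bmx (fun i j => if i == succ j then pY p j + invmx (pX p j) else 0).

Definition bigW (p : point) (s : 'I_m) (a : 'I_(d s)) : 'M[CC]_(Nbig, 1) :=
  @mxcol CC m (fun _ => n) 1 (fun r => if r == s then pW p a else 0).
Definition bigV (p : point) (s : 'I_m) (a : 'I_(d s)) : 'M[CC]_(1, Nbig) :=
  @mxrow CC m (fun _ => n) 1 (fun r => if r == s then pV p a else 0).

Definition oprod (l : seq 'M[CC]_n) : 'M[CC]_n := foldr mulmx 1%:M l.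

Definition IWV (p : point) (s : 'I_m) (a : 'I_(d s)) : 'M[CC]_n :=
  1%:M + pW p a *m pV p a.

(* The subvariety of M^bullet whose GIT quotient is C *)
Definition in_Mbullet (p : point) : Prop :=
  (forall s, (1%:M + pX p s *m pY p s) \in unitmx) /\
  (forall s, (1%:M + pY p s *m pX p s) \in unitmx) /\
  (forall s (a : 'I_(d s)), IWV p a \in unitmx) /\
  (forall s (a : 'I_(d s)), (1%:M + pV p a *m pW p a) 0 0 != 0).

Definition moment (q : 'I_m -> CC) (p : point) : Prop :=
  forall s : 'I_m,
    (1%:M + pX p s *m pY p s) *m invmx (1%:M + pY p (pred s) *m pX p (pred s))
    = q s *: oprod [seq IWV p a | a <- rev (enum 'I_(d s))].

Definition in_C (q : 'I_m -> CC) (p : point) : Prop := in_Mbullet p /\ moment q p.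
Definition in_Ccirc (q : 'I_m -> CC) (p : point) : Prop :=
  in_C q p /\ bigX p \in unitmx.

(* position (0-based) of the spin index (s, a) in the total order; the
   spin indices (s,alpha) <= rho(b) are exactly those with pos < b. *)
Definition pos (s : 'I_m) (a : 'I_(d s)) : nat :=
  (\sum_(r < m | ltn r s) d r + nat_of_ord a)%N.

Definition Phis (b : nat) (p : point) (s : 'I_m) : 'M[CC]_n :=
  (1%:M + pX p s *m pY p s) *m invmx (1%:M + pY p (pred s) *m pX p (pred s))
  *m oprod [seq invmx (IWV p a) | a <- enum 'I_(d s) & ltn (@pos s a) b].

Definition Phi (b : nat) (p : point) : 'M[CC]_Nbig :=
  @mxdiag CC m (fun _ => n) (Phis b p).

Definition Lmx (isZ : bool) (p : point) : 'M[CC]_Nbig :=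
  if isZ then bigZ p else bigY p.
Definition Lb (isZ : bool) (b : nat) (p : point) : 'M[CC]_Nbig :=
  Phi b p *m Lmx isZ p.

Definition dom (isZ : bool) (q : 'I_m -> CC) : point -> Prop :=
  if isZ then in_Ccirc q else in_C q.

Definition genH (isZ : bool) (f : point -> CC) : Prop :=
  exists k : nat, f = fun p => \tr (mxpow (Lmx isZ p) k).
Definition genL (isZ : bool) (f : point -> CC) : Prop :=
  exists (k b : nat), leq b (\sum_(s < m) d s)%N /\
    f = fun p => \tr (mxpow (Lb isZ b p) k).
Definition genI (isZ : bool) (f : point -> CC) : Prop :=
  (exists k : nat, f = fun p => \tr (mxpow (Lmx isZ p) k)) \/
  (exists (k : nat) (s : 'I_m) (a : 'I_(d s)) (r : 'I_m) (b : 'I_(d r)),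
     f = fun p => \tr (bigW p a *m bigV p b *m mxpow (Lmx isZ p) k)).

End Setup.

(* The subalgebra (over CC) generated by a family G of functions, inside the
   algebra of functions on the set D (functions are identified when they agree
   on D). *)
Inductive gen_alg (T : Type) (D : T -> Prop) (G : (T -> CC) -> Prop)
  : (T -> CC) -> Prop :=
| ga_gen f : G f -> gen_alg D G f
| ga_cst (c : CC) : gen_alg D G (fun _ => c)
| ga_add f g : gen_alg D G f -> gen_alg D G g -> gen_alg D G (fun x => f x + g x)
| ga_mul f g : gen_alg D G f -> gen_alg D G g -> gen_alg D G (fun x => f x * g x)
| ga_ext f g : gen_alg D G f -> (forall x, D x -> f x = g x) -> gen_alg D G g.

Definition alg_incl (T : Type) (D : T -> Prop) (G1 G2 : (T -> CC) -> Prop) : Prop :=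
  forall f, gen_alg D G1 f -> gen_alg D G2 f.

(* Main.v *)
Require Import Defs.
From HB Require Import structures.
From mathcomp Require Import all_boot all_order all_algebra.
From mathcomp Require Import Rstruct complex.
Local Open Scope ring_scope.

Module Aux.
Set Implicit Arguments. Unset Strict Implicit. Unset Printing Implicit Defensive.
Import GRing.Theory.


Section General.
Variables (T : Type) (D : T -> Prop) (G : (T -> CC) -> Prop).
Notation Alg := (gen_alg D G).

Lemma alg_sum (I : Type) (l : seq I) (F : I -> T -> CC) :
  (forall i, Alg (F i)) -> Alg (fun p => \sum_(i <- l) F i p).
Proof.
move=> hF; elim: l => [|a l IH].
  by apply: (ga_ext (ga_cst D G 0)) => x _; rewrite big_nil.
by apply: (ga_ext (ga_add (hF a) IH)) => x _; rewrite big_cons.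
Qed.

Lemma alg_scale (c : CC) f : Alg f -> Alg (fun p => c * f p).
Proof. by move=> h; apply: ga_mul => //; apply: ga_cst. Qed.

Lemma mulmx11 k (w : 'cV[CC]_k) (s : 'M[CC]_1) : w *m s = s 0 0 *: w.
Proof. by rewrite {1}(mx11_scalar s) mul_mx_scalar. Qed.

Variables (m n : nat).
Notation N := (Nbig m n).

Lemma mxpowD (A : 'M[CC]_N) i j : mxpow A (i + j) = mxpow A i *m mxpow A j.
Proof.
elim: i => [|i IH]; first by rewrite add0n /= mul1mx.
by rewrite addSn /= -/(mxpow A (i + j)) IH mulmxA.
Qed.

Variables (I : Type) (l : seq I) (cc : I -> T -> CC)
  (ww : I -> T -> 'cV[CC]_N) (vv : I -> T -> 'rV[CC]_N) (A M : T -> 'M[CC]_N).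
Hypotheses (hc : forall t, Alg (cc t))
  (hvw : forall t t' j, Alg (fun p => (vv t p *m mxpow (A p) j *m ww t' p) 0 0))
  (hA : forall k, Alg (fun p => \tr (mxpow (A p) k)))
  (hM : forall p, D p -> M p = A p + \sum_(t <- l) cc t p *: (ww t p *m vv t p)).

Record term := Term { ti : nat; tt : I; tj : nat; tt' : I; tf : T -> CC; tfA : Alg tf }.

Definition tm (x : term) p : 'M[CC]_N :=
  tf x p *: (mxpow (A p) (ti x) *m ww (tt x) p *m (vv (tt' x) p *m mxpow (A p) (tj x))).

Definition shift (x : term) := Term (ti x).+1 (tt x) (tj x) (tt' x) (tfA x).

Lemma coefA u x : Alg (fun p => cc u p * tf x p * (vv u p *m mxpow (A p) (ti x) *m ww (tt x) p) 0 0).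
Proof. by apply: ga_mul; [apply: ga_mul; [apply: hc | apply: tfA] | apply: hvw]. Qed.

Definition mk u x := Term 0 u (tj x) (tt' x) (coefA u x).

Lemma pow_decomp k : exists L : seq term, forall p, D p ->
  mxpow (M p) k = mxpow (A p) k + \sum_(x <- L) tm x p.
Proof.
elim: k => [|k [L IH]].
  by exists [::] => p _; rewrite big_nil addr0.
exists ([seq shift x | x <- L] ++ [seq Term 0 u k u (hc u) | u <- l]
        ++ [seq mk u x | u <- l, x <- L]) => p Dp.
rewrite /= -/(mxpow (M p) k) -/(mxpow (A p) k) IH // hM //.
rewrite !big_cat !big_map big_allpairs_dep /=.
rewrite mulmxDl !mulmxDr.
have e1 : A p *m (\sum_(x <- L) tm x p) = \sum_(x <- L) tm (shift x) p.
  rewrite mulmx_sumr; apply: eq_bigr => x _; rewrite /tm /= -/(mxpow (A p) (ti x)).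
  by rewrite -scalemxAr !mulmxA.
have e2 : (\sum_(t <- l) cc t p *: (ww t p *m vv t p)) *m mxpow (A p) k =
   \sum_(u <- l) tm (Term 0 u k u (hc u)) p.
  rewrite mulmx_suml; apply: eq_bigr => u _; rewrite /tm /= mul1mx.
  by rewrite -scalemxAl mulmxA.
have e3 : (\sum_(t <- l) cc t p *: (ww t p *m vv t p)) *m (\sum_(x <- L) tm x p) =
   \sum_(u <- l) \sum_(x <- L) tm (mk u x) p.
  rewrite mulmx_suml; apply: eq_bigr => u _; rewrite mulmx_sumr; apply: eq_bigr => x _.
  rewrite /tm /= mul1mx -scalemxAl -scalemxAr scalerA.
  rewrite !mulmxA -(mulmxA (ww u p) (vv u p)) -(mulmxA (ww u p) (vv u p *m _)).
  by rewrite mulmx11 -!scalemxAl scalerA.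
by rewrite e1 e2 e3 !addrA.
Qed.

Lemma trace_pert k : Alg (fun p => \tr (mxpow (M p) k)).
Proof.
have [L hL] := pow_decomp k.
have h : Alg (fun p => \tr (mxpow (A p) k) + \sum_(x <- L)
   tf x p * (vv (tt' x) p *m mxpow (A p) (tj x + ti x) *m ww (tt x) p) 0 0).
  apply: ga_add => //; apply: alg_sum => x; apply: ga_mul; [apply: tfA|apply: hvw].
apply: (ga_ext h) => p Dp; rewrite hL // mxtraceD raddf_sum /=; congr (_ + _).
apply: eq_bigr => x _; rewrite /tm mxtraceZ mxtrace_mulC trace_mx11.
by rewrite mxpowD !mulmxA.
Qed.

End General.


Section Blocks.
Variables (m n : nat) (d : 'I_m -> nat).
Notation N := (Nbig m n).
Notation pt := (point n d).

Definition Ds (s : 'I_m) (X : 'M[CC]_n) : 'M[CC]_N :=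
  @mxdiag CC m (fun _ => n) (fun r => if r == s then X else 0).
Definition E (s : 'I_m) : 'M[CC]_N := Ds s 1%:M.

Lemma mxdiag_mul (D1 D2 : 'I_m -> 'M[CC]_n) :
  @mxdiag CC m (fun _ => n) D1 *m @mxdiag CC m (fun _ => n) D2 =
  @mxdiag CC m (fun _ => n) (fun i => D1 i *m D2 i).
Proof.
rewrite {2}/mxdiag mul_mxdiag_mxblock /mxdiag; apply: eq_mxblock => i j.
by case: eqVneq => [->|_]; rewrite ?conform_mx_id ?mulmx0.
Qed.

Lemma DsD s X Y : Ds s (X + Y) = Ds s X + Ds s Y.
Proof. by rewrite /Ds -mxdiagD; apply: eq_mxdiag => i; case: eqP; rewrite ?addr0. Qed.

Lemma Ds0 s : Ds s 0 = 0.
Proof. by rewrite /Ds -(mxdiag0 (p_ := fun _ => n)); apply: eq_mxdiag => i; case: eqP. Qed.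

Lemma Ds_sum (I : Type) (l : seq I) s (F : I -> 'M[CC]_n) :
  Ds s (\sum_(i <- l) F i) = \sum_(i <- l) Ds s (F i).
Proof.
elim: l => [|a l IH]; first by rewrite !big_nil Ds0.
by rewrite !big_cons DsD IH.
Qed.

Lemma DsM s X Y : Ds s X *m Ds s Y = Ds s (X *m Y).
Proof. by rewrite /Ds mxdiag_mul; apply: eq_mxdiag => i; case: eqP; rewrite ?mul0mx. Qed.

Lemma DsZ s (c : CC) X : Ds s (c *: X) = c *: Ds s X.
Proof.
have -> : c *: Ds s X = Ds s X *m @mxdiag CC m (fun _ => n) (fun _ => c%:M).
  by rewrite mxdiagZ mul_mx_scalar.
by rewrite /Ds mxdiag_mul; apply: eq_mxdiag => i; case: eqP; rewrite ?mul0mx ?mul_mx_scalar.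
Qed.

Lemma mxdiag_decomp (D0 : 'I_m -> 'M[CC]_n) :
  @mxdiag CC m (fun _ => n) D0 = \sum_s Ds s (D0 s).
Proof.
rewrite /Ds -mxdiag_sum; apply: eq_mxdiag => i.
rewrite (bigD1 i) //= eqxx big1 ?addr0 // => j /negPf; rewrite eq_sym => ->//.
Qed.

Lemma sumE : \sum_s E s = 1%:M.
Proof.
rewrite /E -mxdiag_decomp.
by rewrite (mxdiagZ (p_ := fun _ => n) (1 : CC)).
Qed.

Lemma EE r s : E r *m E s = if r == s then E s else 0.
Proof.
rewrite /E /Ds mxdiag_mul; case: eqVneq => [->|ne].
  by apply: eq_mxdiag => i; case: eqP; rewrite ?mul1mx ?mul0mx.
rewrite -(mxdiag0 (p_ := fun _ => n)); apply: eq_mxdiag => i.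
by case: (i =P r) => [->|_]; rewrite ?(negPf ne) ?mul0mx ?mulmx0.
Qed.

Lemma bmxE (B : 'I_m -> 'I_m -> 'M[CC]_n) s :
  bmx B *m E s = bmx (fun i j => if j == s then B i j else 0).
Proof.
rewrite /bmx /E /Ds mul_mxblock_mxdiag; apply: eq_mxblock => i j.
by case: eqP; rewrite ?mulmx1 ?mulmx0.
Qed.

Lemma Ebmx (B : 'I_m -> 'I_m -> 'M[CC]_n) s :
  E s *m bmx B = bmx (fun i j => if i == s then B i j else 0).
Proof.
rewrite /bmx /E /Ds mul_mxdiag_mxblock; apply: eq_mxblock => i j.
by case: eqP; rewrite ?mul1mx ?mul0mx.
Qed.

Lemma Lshift isZ (p : pt) s : Lmx isZ p *m E s = E (succ s) *m Lmx isZ p.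
Proof.
rewrite /Lmx; case: isZ; rewrite /bigZ /bigY bmxE Ebmx; apply: eq_mxblock => i j.
  all: (case: (j =P s) => [->|ne]; first by case: (i =P succ s));
  case: (i =P succ s) => [->|] //; case: (succ s =P succ j) => // /ordS_inj h;
  by case: ne.
Qed.

Lemma EW (p : pt) s (a : 'I_(d s)) : E s *m bigW p a = bigW p a.
Proof.
rewrite /E /Ds /bigW mul_mxdiag_mxcol; apply: eq_mxcol => i.
by case: eqP; rewrite ?mul1mx ?mul0mx.
Qed.

Lemma VE (p : pt) s (a : 'I_(d s)) : bigV p a *m E s = bigV p a.
Proof.
rewrite /E /Ds /bigV mul_mxrow_mxdiag; apply: eq_mxrow => i.
by case: eqP; rewrite ?mulmx1 ?mulmx0.
Qed.

Lemma WV (p : pt) s (a a' : 'I_(d s)) :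
  bigW p a *m bigV p a' = Ds s (pW p a *m pV p a').
Proof.
rewrite /bigW /bigV mul_mxcol_mxrow /Ds /mxdiag; apply: eq_mxblock => i j.
case: (i =P s) => [->|ne]; case: (j =P s) => [->|ne2]; rewrite ?eqxx ?conform_mx_id ?mul0mx ?mulmx0 //.
- by case: (s =P j) => // h; case: ne2.
- by case: ifP.
- by case: ifP.
Qed.

Lemma VW (p : pt) s (a a' : 'I_(d s)) :
  bigV p a' *m bigW p a = pV p a' *m pW p a.
Proof.
rewrite /bigW /bigV mul_mxrow_mxcol (bigD1 s) //= !eqxx big1 ?addr0 // => i /negPf ->.
by rewrite mul0mx.
Qed.

End Blocks.


Section Cyclic.
Variables (m n : nat) (q : 'I_m -> CC).
Hypothesis hm0 : (0 < m)%N.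
Hypothesis hq : forall s, q s != 0.
Notation N := (Nbig m n).
Notation E := (@E m n).

Lemma val_iter j (s : 'I_m) : val (iter j (@succ m) s) = ((s + j) %% m)%N.
Proof.
elim: j => [|j IH]; first by rewrite addn0 modn_small.
by rewrite /= IH -addn1 modnDml addn1 addnS.
Qed.

Lemma iter_fix k (s : 'I_m) : (iter k (@succ m) s == s) = (m %| k)%N.
Proof.
apply/eqP/idP => [h|h].
  have := congr1 val h; rewrite val_iter => e.
  have : (s + k == s + 0 %[mod m])%N by rewrite addn0 e modn_small.
  by rewrite eqn_modDl mod0n.
apply: val_inj; rewrite val_iter /=.
by rewrite -modnDmr (eqP h) addn0 modn_small.
Qed.

Definition cj (s : 'I_m) k := \prod_(i < k) q (iter i.+1 (@succ m) s).

Lemma cj_succ k s : (m %| k)%N -> cj (succ s) k = cj s k.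
Proof.
move=> hk; apply: (mulfI (hq (succ s))).
have e1 : q (succ s) * cj (succ s) k = \prod_(i < k.+1) q (iter i.+1 (@succ m) s).
  by rewrite big_ord_recl /cj; congr (_ * _); apply: eq_bigr => i _; rewrite /= -iterSr.
rewrite e1 big_ord_recr /= mulrC; congr (_ * _).
by move: (iter_fix k s); rewrite hk => /eqP ->.
Qed.

Definition s0 : 'I_m := Ordinal hm0.

Lemma cj_const k s : (m %| k)%N -> cj s k = cj s0 k.
Proof.
move=> hk.
have -> : s = iter s (@succ m) s0.
  by apply: val_inj; rewrite val_iter /= add0n modn_small.
elim: (nat_of_ord s) => [|j IH] //=.
by rewrite cj_succ.
Qed.

Lemma cj_neq0 k s : cj s k != 0.
Proof. by apply/prodf_neq0 => i _. Qed.

Definition Qm : 'M[CC]_N := \sum_s q s *: E s.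

Lemma QE r : Qm *m E r = q r *: E r.
Proof.
rewrite /Qm mulmx_suml (bigD1 r) //= -scalemxAl EE eqxx big1 ?addr0 //.
by move=> s /negPf ns; rewrite -scalemxAl EE ns scaler0.
Qed.

Lemma trace_decomp (X : 'M[CC]_N) : \tr X = \sum_s \tr (X *m E s).
Proof. by rewrite -raddf_sum -mulmx_sumr sumE mulmx1. Qed.

Variable L : 'M[CC]_N.
Hypothesis hL : forall s, L *m E s = E (succ s) *m L.

Lemma Lpow_E j s : mxpow L j *m E s = E (iter j (@succ m) s) *m mxpow L j.
Proof.
elim: j => [|j IH]; first by rewrite /= mul1mx mulmx1.
by rewrite /= -/(mxpow L j) -mulmxA IH mulmxA hL mulmxA.
Qed.

Lemma QLpow j s : mxpow (Qm *m L) j *m E s = cj s j *: (mxpow L j *m E s).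
Proof.
elim: j => [|j IH]; first by rewrite /cj big_ord0 scale1r.
rewrite /= -/(mxpow L j) -/(mxpow (Qm *m L) j) -mulmxA IH -scalemxAr.
have e : L *m (mxpow L j *m E s) = E (succ (iter j (@succ m) s)) *m (L *m mxpow L j).
  by rewrite Lpow_E mulmxA hL mulmxA.
rewrite -mulmxA e -(mulmxA Qm) e mulmxA QE -scalemxAl scalerA.
by rewrite /cj big_ord_recr /= mulmxA.
Qed.

Lemma trLE0 k s : ~~ (m %| k)%N -> \tr (mxpow L k *m E s) = 0.
Proof.
move=> hk.
have -> : mxpow L k *m E s = mxpow L k *m E s *m E s by rewrite -mulmxA EE eqxx.
rewrite mxtrace_mulC Lpow_E mulmxA EE.
by rewrite eq_sym iter_fix (negPf hk) mul0mx mxtrace0.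
Qed.

Lemma trQL k : \tr (mxpow (Qm *m L) k) =
  if (m %| k)%N then cj s0 k * \tr (mxpow L k) else 0.
Proof.
rewrite trace_decomp; case: ifP => hk.
  rewrite [in RHS]trace_decomp mulr_sumr; apply: eq_bigr => s _.
  by rewrite QLpow mxtraceZ cj_const.
by rewrite big1 // => s _; rewrite QLpow mxtraceZ trLE0 ?hk // mulr0.
Qed.

Lemma trL0 k : ~~ (m %| k)%N -> \tr (mxpow L k) = 0.
Proof. by move=> hk; rewrite trace_decomp big1 // => s _; rewrite trLE0. Qed.

End Cyclic.


Lemma oprod_rcons k (l : seq 'M[CC]_k) x : oprod (rcons l x) = oprod l *m x.
Proof. by elim: l => [|y l IH] /=; rewrite ?mulmx1 ?mul1mx // IH mulmxA. Qed.

Lemma LL k (X : Type) (f : X -> 'M[CC]_k) (P : pred X) (l : seq X) :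
  (forall x, f x \in unitmx) -> pairwise (fun x y => P y ==> P x) l ->
  oprod [seq f x | x <- rev l] *m oprod [seq invmx (f x) | x <- filter P l]
  = oprod [seq f x | x <- rev (filter (predC P) l)].
Proof.
move=> hu; elim: l => [|x l IH] /=; first by rewrite mulmx1.
move=> /andP[hx hl]; rewrite rev_cons map_rcons oprod_rcons.
case: ifP => Px /=.
  by rewrite -mulmxA (mulmxA (f x)) mulmxV // mul1mx IH.
have -> : filter P l = [::].
  apply/nilP; rewrite /nilp size_filter -leqn0 leqNgt -has_count.
  rewrite -all_predC; apply: sub_all hx => y /=; rewrite Px.
  by case: (P y).
rewrite /= mulmx1 rev_cons map_rcons oprod_rcons; congr (_ *m _).
have -> : filter (predC P) l = l.
  apply/all_filterP; apply: sub_all hx => y /=; rewrite Px /=.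
  by case: (P y).
by [].
Qed.

Section PhiDecomp.
Variables (m n : nat) (d : 'I_m -> nat) (q : 'I_m -> CC) (isZ : bool).
Notation N := (Nbig m n).
Notation pt := (point n d).
Notation AlgI := (gen_alg (@dom m n d isZ q) (@genI m n d isZ)).

Lemma pairwise_pos s b :
  pairwise (fun x y : 'I_(d s) => (pos y < b)%N ==> (pos x < b)%N) (enum 'I_(d s)).
Proof.
have h : pairwise (relpre val ltn) (enum 'I_(d s)).
  by rewrite -pairwise_map val_enum_ord -sorted_pairwise; [apply: iota_ltn_sorted | apply: ltn_trans].
apply: sub_pairwise h => x y /= xy; apply/implyP => hy.
by apply: leq_ltn_trans hy; rewrite /pos leq_add2l ltnW.
Qed.

Lemma Phis_eq b (p : pt) s : in_C q p ->
  Phis b p s = q s *: oprod [seq IWV p a | a <- rev (filter (fun a => b <= pos a)%N (enum 'I_(d s)))].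
Proof.
move=> [[_ [_ [hu _]]] hmo]; rewrite /Phis hmo -scalemxAl; congr (_ *: _).
rewrite (@LL n _ (fun a => IWV p a) (fun a : 'I_(d s) => ltn (pos a) b)) //; last by apply: pairwise_pos.
have e : [seq x <- enum 'I_(d s) | predC (fun a : 'I_(d s) => ltn (pos a) b) x] =
    [seq a <- enum 'I_(d s) | (b <= pos a)%N].
  by apply: eq_filter => a; rewrite /predC /= ltnNge negbK.
by rewrite e.
Qed.

Lemma hVWa (s : 'I_m) (x a : 'I_(d s)) : AlgI (fun p => (pV p x *m pW p a) 0 0).
Proof.
apply: (ga_ext (ga_gen _ (or_intror (ex_intro _ 0%N (ex_intro _ s (ex_intro _ a
   (ex_intro _ s (ex_intro _ x erefl)))))))) => p _.
by rewrite /= mulmx1 mxtrace_mulC VW trace_mx11.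
Qed.

Definition Coef := {f : pt -> CC | AlgI f}.
Definition one_coef : Coef := exist _ (fun _ => 1) (ga_cst _ _ 1).
Definition mul_coef s (x a : 'I_(d s)) (c : Coef) : Coef :=
  exist _ (fun p => (pV p x *m pW p a) 0 0 * sval c p) (ga_mul (hVWa x a) (proj2_sig c)).

Fixpoint spl s (la : seq 'I_(d s)) : seq (Coef * ('I_(d s) * 'I_(d s))) :=
  match la with
  | [::] => [::]
  | x :: la' => (one_coef, (x, x)) :: (spl la' ++
      [seq (mul_coef x t.2.1 t.1, (x, t.2.2)) | t <- spl la'])
  end.

Lemma spl_eq s (la : seq 'I_(d s)) (p : pt) :
  oprod [seq IWV p a | a <- la] =
  1%:M + \sum_(t <- spl la) sval t.1 p *: (pW p t.2.1 *m pV p t.2.2).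
Proof.
elim: la => [|x la IH] /=; first by rewrite big_nil addr0.
rewrite IH /IWV big_cons big_cat big_map /= scale1r.
rewrite mulmxDl mul1mx mulmxDr mulmx1 mulmx_sumr.
have -> : \sum_(i <- spl la) pW p x *m pV p x *m (sval i.1 p *: (pW p i.2.1 *m pV p i.2.2))
  = \sum_(j <- spl la) ((pV p x *m pW p j.2.1) 0 0 * sval j.1 p) *: (pW p x *m pV p j.2.2).
  apply: eq_bigr => t _; rewrite -scalemxAr !mulmxA -(mulmxA (pW p x)) mulmx11.
  by rewrite -scalemxAl scalerA mulrC.
by rewrite !addrA [1%:M + _ + _]addrAC.
Qed.

Definition J := {s : 'I_m & (Coef * ('I_(d s) * 'I_(d s)))%type}.
Definition items b : seq J :=
  [seq Tagged (fun s => (Coef * ('I_(d s) * 'I_(d s)))%type) t | s <- index_enum 'I_m,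
     t <- spl (rev (filter (fun a => b <= pos a)%N (enum 'I_(d s))))].
Definition ccJ (t : J) (p : pt) : CC := q (tag t) * sval (tagged t).1 p.
Definition wwJ (t : J) (p : pt) : 'cV[CC]_N := bigW p (tagged t).2.1.
Definition vvJ (t : J) (p : pt) : 'rV[CC]_N := bigV p (tagged t).2.2 *m Lmx isZ p.

Lemma Lb_eq b (p : pt) : in_C q p ->
  Lb isZ b p = @Qm m n q *m Lmx isZ p + \sum_(t <- items b) ccJ t p *: (wwJ t p *m vvJ t p).
Proof.
move=> hC; rewrite /Lb /Phi mxdiag_decomp.
under eq_bigr do rewrite Phis_eq // spl_eq DsZ DsD Ds_sum.
rewrite /items big_allpairs_dep /= /Qm mulmx_suml mulmx_suml -big_split /=.
apply: eq_bigr => s _; rewrite scalerDr mulmxDl -/(E s) -scalemxAl; congr (_ + _).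
rewrite scaler_sumr mulmx_suml; apply: eq_bigr => t _.
by rewrite /ccJ /wwJ /vvJ /= DsZ -WV -!scalemxAl scalerA mulmxA.
Qed.

End PhiDecomp.


Lemma alg_incl_of (T : Type) (D : T -> Prop) (G1 G2 : (T -> CC) -> Prop) :
  (forall f, G1 f -> gen_alg D G2 f) -> alg_incl D G1 G2.
Proof.
move=> h f; elim => {f} [f /h //|c|f g _ hf _ hg|f g _ hf _ hg|f g _ hf e].
- exact: ga_cst.
- exact: ga_add.
- exact: ga_mul.
- exact: ga_ext hf e.
Qed.

Section Main.
Variables (m n : nat) (d : 'I_m -> nat) (q : 'I_m -> CC) (isZ : bool).
Hypothesis hm0 : (0 < m)%N.
Hypothesis hq : forall s, q s != 0.
Notation N := (Nbig m n).
Notation pt := (point n d).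
Notation AlgI := (gen_alg (@dom m n d isZ q) (@genI m n d isZ)).
Notation AlgL := (gen_alg (@dom m n d isZ q) (@genL m n d isZ)).

Lemma dom_C (p : pt) : dom isZ q p -> in_C q p.
Proof. by rewrite /dom; case: isZ => // -[]. Qed.

Lemma pos_lt s (a : 'I_(d s)) : (pos a < \sum_(r < m) d r)%N.
Proof.
rewrite /pos [X in (_ < X)%N](bigID (fun r : 'I_m => ltn r s)) /= ltn_add2l (bigD1 s) ?ltnn //=.
exact: leq_trans (ltn_ord a) (leq_addr _ _).
Qed.

Lemma filt_nil s : [seq a <- enum 'I_(d s) | (\sum_(r < m) d r <= pos a)%N] = [::].
Proof.
apply/nilP; rewrite /nilp size_filter -leqn0 leqNgt -has_count -all_predC.
by apply/allP => a _ /=; rewrite -ltnNge pos_lt.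
Qed.

Lemma items_full : items n d q isZ (\sum_(r < m) d r) = [::].
Proof.
rewrite /items; have h := filt_nil; move: (\sum_(r < m) d r) h => b0 h.
by elim: (index_enum 'I_m) => [|s l IH] //=; rewrite h.
Qed.

Lemma HL : alg_incl (@dom m n d isZ q) (@genH m n d isZ) (@genL m n d isZ).
Proof.
apply: alg_incl_of => f [k ->].
have hLb : forall p : pt, dom isZ q p ->
  Lb isZ (\sum_(r < m) d r) p = @Qm m n q *m Lmx isZ p.
  by move=> p /dom_C hC; rewrite (Lb_eq isZ _ hC) items_full big_nil addr0.
case: (boolP (m %| k)%N) => hk.
  have g : AlgL (fun p : pt => \tr (mxpow (Lb isZ (\sum_(r < m) d r) p) k)).
    by apply: ga_gen; exists k, (\sum_(r < m) d r); split.
  apply: (ga_ext (alg_scale (cj q (s0 hm0) k)^-1 g)) => p Dp.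
  rewrite hLb // (trQL hm0 hq (Lshift isZ p)) hk mulrA mulVf ?mul1r //.
  exact: cj_neq0.
apply: (ga_ext (ga_cst _ _ 0)) => p _.
by rewrite (trL0 (Lshift isZ p)).
Qed.

Lemma hvw_gen r (a' : 'I_(d r)) s (a : 'I_(d s)) j :
  AlgI (fun p : pt => (bigV p a' *m Lmx isZ p *m mxpow (@Qm m n q *m Lmx isZ p) j *m bigW p a) 0 0).
Proof.
have g : AlgI (fun p : pt => \tr (bigW p a *m bigV p a' *m mxpow (Lmx isZ p) j.+1)).
  by apply: ga_gen; right; exists j.+1, s, a, r, a'.
apply: (ga_ext (alg_scale (cj q s j) g)) => p _.
rewrite -(EW p a) !mulmxA -(mulmxA _ _ (E n s)) (QLpow q (Lshift isZ p)).
rewrite -scalemxAr -scalemxAl mxE; congr (_ * _).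
rewrite -/(mxpow (Lmx isZ p) j) EW !mulmxA -(mulmxA _ (E n s)) EW.
rewrite -!mulmxA mxtrace_mulC trace_mx11 !mulmxA.
by [].
Qed.

Lemma LI : alg_incl (@dom m n d isZ q) (@genL m n d isZ) (@genI m n d isZ).
Proof.
apply: alg_incl_of => f [k [b [_ ->]]].
apply: (@trace_pert _ _ _ m n _ (items n d q isZ b) (@ccJ m n d q isZ) (@wwJ m n d q isZ)
  (@vvJ m n d q isZ) (fun p => @Qm m n q *m Lmx isZ p) (Lb isZ b)).
- by move=> t; apply: alg_scale; exact: (proj2_sig (tagged t).1).
- by move=> t t' j; rewrite /vvJ /wwJ; apply: hvw_gen.
- move=> j; case: (boolP (m %| j)%N) => hj.
    have g : AlgI (fun p : pt => \tr (mxpow (Lmx isZ p) j)).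
      by apply: ga_gen; left; exists j.
    apply: (ga_ext (alg_scale (cj q (s0 hm0) j) g)) => p _.
    by rewrite (trQL hm0 hq (Lshift isZ p)) hj.
  apply: (ga_ext (ga_cst _ _ 0)) => p _.
  by rewrite (trQL hm0 hq (Lshift isZ p)) (negPf hj).
- by move=> p /dom_C hC; rewrite (Lb_eq isZ _ hC).
Qed.

End Main.

End Aux.

Theorem lemma5p5 (m n : nat) (d : 'I_m -> nat) (q : 'I_m -> CC)
  (hm : (2 <= m)%N) (hn : (1 <= n)%N)
  (hd0 : forall s : 'I_m, val s = 0%N -> (1 <= d s)%N)
  (hq : forall s : 'I_m, q s != 0)
  (isZ : bool) :
  alg_incl (@dom m n d isZ q) (@genH m n d isZ) (@genL m n d isZ) /\
  alg_incl (@dom m n d isZ q) (@genL m n d isZ) (@genI m n d isZ).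
Proof.
have hm0 : (0 < m)%N by apply: ltnW.
split; [exact: (@Aux.HL m n d q isZ hm0 hq) | exact: (@Aux.LI m n d q isZ hm0 hq)].
Qed.
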